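(* For every principal $n$, every privilege $p\in\mathcal{A}(n)$, and every closed $p$-pure expression $e$ with $\varnothing\vdash e:t$, we have, for all principals $n'$ and all $P\subseteq\mathsf{Privileges}$, $[\![\mathtt{signs}\ n\ (\mathtt{dopriv}\ p\ \mathtt{in}\ (\mathtt{check}\ p\ \mathtt{for}\ e))]\!]\,n'\,P\,\{\}=[\![\mathtt{signs}\ n\ e]\!]\,n'\,P\,\{\}$.
   Context: Fix sets $\mathsf{Principals}$ and $\mathsf{Privileges}$ and an access control list $\mathcal{A}:\mathsf{Principals}\to\mathcal{P}(\mathsf{Privileges})$. Language. Types: $t::=\mathtt{bool}\mid t_1\to t_2$. Expressions: $e::=\mathtt{true}\mid x\mid \mathtt{if}\ e\ \mathtt{then}\ e_1\ \mathtt{else}\ e_2\mid \lambda x.e\mid e_1\,e_2\mid \mathtt{letrec}\ f(x)=e_1\ \mathtt{in}\ e_2\mid \mathtt{signs}\ n\ e\mid \mathtt{dopriv}\ p\ \mathtt{in}\ e\mid \mathtt{check}\ p\ \mathtt{for}\ e\mid \mathtt{test}\ p\ \mathtt{then}\ e_1\ \mathtt{else}\ e_2$ ($n$ a principal, $p$ a privilege). Typing $D\vdash e:t$ is simply typed: $\mathtt{letrec}$ typed by $D,f:t_1\to t_2,x:t_1\vdash e_1:t_2$ and $D,f:t_1\to t_2\vdash e_2:t$; $\mathtt{signs},\mathtt{dopriv},\mathtt{check}$ preserve the body type; $\mathtt{test}$, $\mathtt{if}$ need branches of a common type ($\mathtt{if}$ a $\mathtt{bool}$ guard). An expression is closed if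 it has no free variables; $\{\}$ is the empty environment. Eager semantics. $\bot,\star$ are two distinct values, neither booleans nor functions. For a cpo $C$, $C_{\bot\star}=C\cup\{\bot,\star\}$ with $u\le v$ iff $u=\bot$ or $u=v$ or $u,v\in C$, $u\le v$. $[\![\mathtt{bool}]\!]=\{\mathsf{true},\mathsf{false}\}$ and $\mathcal{P}(\mathsf{Privileges})$ ordered by equality; $[\![t_1\to t_2]\!]=\mathcal{P}(\mathsf{Privileges})\to[\![t_1]\!]\to[\![t_2]\!]_{\bot\star}$ (continuous, pointwise order). $[\![D]\!]$: records $h$ with $h.x\in[\![D(x)]\!]$. $[\![D\vdash e:t]\!]\in\mathsf{Principals}\to\mathcal{P}(\mathsf{Privileges})\to[\![D]\!]\to[\![t]\!]_{\bot\star}$, written $[\![e]\!]nPh$. ''let $d=E_1$ in $E_2$'' yields $E_1$ if $E_1\in\{\bot,\star\}$, else $E_2$ with $d:=E_1$. $P\sqcup_n\{p\}$ is $P\cup\{p\}$ if $p\in\mathcal{A}(n)$, else $P$. Equations: $[\![\mathtt{true}]\!]nPh=\mathsf{true}$; $[\![x]\!]nPh=h.x$; $[\![\mathtt{if}\ e\ \mathtt{then}\ e_1\ \mathtt{else}\ e_2]\!]nPh=$ let $b=[\![e]\!]nPh$ in (if $b$ then $[\![e_1]\!]nPh$ else $[\![e_2]\!]nPh$); $[\![\lambda x.e]\!]nPh=\lambda P'.\lambda d.[\![e]\!]nP'(h[x\mapsto d])$; $[\![e_1e_2]\!]nPh=$ let $f=[\![e_1]\!]nPh$ in let $d=[\![e_2]\!]nPh$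 in $fPd$; $[\![\mathtt{letrec}\ f(x)=e_1\ \mathtt{in}\ e_2]\!]nPh=[\![e_2]\!]nP(h[f\mapsto\mathit{fix}\,G])$ with $G(g)=\lambda P'.\lambda d.[\![e_1]\!]nP'(h[f\mapsto g,x\mapsto d])$ (least fixed point); $[\![\mathtt{signs}\ n'\ e]\!]nPh=[\![e]\!]n'(P\cap\mathcal{A}(n'))h$; $[\![\mathtt{dopriv}\ p\ \mathtt{in}\ e]\!]nPh=[\![e]\!]n(P\sqcup_n\{p\})h$; $[\![\mathtt{check}\ p\ \mathtt{for}\ e]\!]nPh=$ if $p\in P$ then $[\![e]\!]nPh$ else $\star$; $[\![\mathtt{test}\ p\ \mathtt{then}\ e_1\ \mathtt{else}\ e_2]\!]nPh=$ if $p\in P$ then $[\![e_1]\!]nPh$ else $[\![e_2]\!]nPh$. An expression is $p$-pure if it has no subexpression of the form $\mathtt{check}\ p\ \mathtt{for}\ e'$ or $\mathtt{test}\ p\ \mathtt{then}\ e'\ \mathtt{else}\ e''$. *)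

(* Defs.v *)
From Stdlib Require Import List Arith ClassicalEpsilon.
Import ListNotations.

Inductive ty : Type := TBool | TArr (t1 t2 : ty).

Section Lang.
Context (Principal Privilege : Type).

Definition var := nat.

Inductive expr : Type :=
| ETrue
| EVar (x : var)
| EIf (e e1 e2 : expr)
| ELam (x : var) (e : expr)
| EApp (e1 e2 : expr)
| ELetrec (f x : var) (e1 e2 : expr)
| ESigns (n : Principal) (e : expr)
| EDopriv (p : Privilege) (e : expr)
| ECheck (p : Privilege) (e : expr)
| ETest (p : Privilege) (e1 e2 : expr).

Fixpoint free_in (y : var) (e : expr) : Prop :=
  match e with
  | ETrue => False
  | EVar x => y = x
  | EIf e0 e1 e2 => free_in y e0 \/ free_in y e1 \/ free_in y e2
  | ELam x e0 => y <> x /\ free_in y e0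
  | EApp e1 e2 => free_in y e1 \/ free_in y e2
  | ELetrec f x e1 e2 =>
      (y <> f /\ y <> x /\ free_in y e1) \/ (y <> f /\ free_in y e2)
  | ESigns _ e0 => free_in y e0
  | EDopriv _ e0 => free_in y e0
  | ECheck _ e0 => free_in y e0
  | ETest _ e1 e2 => free_in y e1 \/ free_in y e2
  end.

Definition closed (e : expr) : Prop := forall y, ~ free_in y e.

Fixpoint p_pure (p : Privilege) (e : expr) : Prop :=
  match e with
  | ETrue | EVar _ => True
  | EIf e0 e1 e2 => p_pure p e0 /\ p_pure p e1 /\ p_pure p e2
  | ELam _ e0 => p_pure p e0
  | EApp e1 e2 => p_pure p e1 /\ p_pure p e2
  | ELetrec _ _ e1 e2 => p_pure p e1 /\ p_pure p e2
  | ESigns _ e0 => p_pure p e0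
  | EDopriv _ e0 => p_pure p e0
  | ECheck q e0 => q <> p /\ p_pure p e0
  | ETest q e1 e2 => q <> p /\ p_pure p e1 /\ p_pure p e2
  end.

Definition ctx := list (var * ty).

Fixpoint lookup (D : ctx) (x : var) : option ty :=
  match D with
  | [] => None
  | (y, t) :: D' => if Nat.eqb x y then Some t else lookup D' x
  end.

Inductive has_type : ctx -> expr -> ty -> Type :=
| T_True D : has_type D ETrue TBool
| T_Var D x t : lookup D x = Some t -> has_type D (EVar x) t
| T_If D e e1 e2 t :
    has_type D e TBool -> has_type D e1 t -> has_type D e2 t ->
    has_type D (EIf e e1 e2) t
| T_Lam D x e t1 t2 :
    has_type ((x, t1) :: D) e t2 -> has_type D (ELam x e) (TArr t1 t2)
| T_App D e1 e2 t1 t2 :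
    has_type D e1 (TArr t1 t2) -> has_type D e2 t1 -> has_type D (EApp e1 e2) t2
| T_Letrec D f x e1 e2 t1 t2 t :
    has_type ((x, t1) :: (f, TArr t1 t2) :: D) e1 t2 ->
    has_type ((f, TArr t1 t2) :: D) e2 t ->
    has_type D (ELetrec f x e1 e2) t
| T_Signs D n e t : has_type D e t -> has_type D (ESigns n e) t
| T_Dopriv D p e t : has_type D e t -> has_type D (EDopriv p e) t
| T_Check D p e t : has_type D e t -> has_type D (ECheck p e) t
| T_Test D p e1 e2 t :
    has_type D e1 t -> has_type D e2 t -> has_type D (ETest p e1 e2) t.

Definition privs := Privilege -> Prop.

Inductive res (C : Type) : Type := RBot | RStar | RVal (c : C).
Arguments RBot {C}. Arguments RStar {C}. Arguments RVal {C} c.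

Fixpoint sem (t : ty) : Type :=
  match t with
  | TBool => bool
  | TArr t1 t2 => privs -> sem t1 -> res (sem t2)
  end.

Definition sem_default (t : ty) : sem t :=
  match t with
  | TBool => true
  | TArr t1 t2 => fun _ _ => RBot
  end.

Definition bind {C D : Type} (r : res C) (k : C -> res D) : res D :=
  match r with RBot => RBot | RStar => RStar | RVal c => k c end.

Definition is_val {C} (r : res C) : Prop := exists c, r = RVal c.

Definition val_of {C} (dflt : C) (r : res C) : C :=
  match r with RVal c => c | _ => dflt end.

(* Least upper bound of an (omega-)chain in C_{bot,star}, given lubs of
   chains in C.  A chain is either constantly bot, or eventually star, or
   eventually a chain in C. *)
Definition sup_res {C : Type} (dflt : C) (supC : (nat -> C) -> C)
  (c : nat -> res C) : res C :=
  match excluded_middle_informative (exists k, c k = RStar) with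
  | left _ => RStar
  | right _ =>
      match excluded_middle_informative (exists k, is_val (c k)) with
      | left H =>
          let k0 := proj1_sig (constructive_indefinite_description _ H) in
          RVal (supC (fun j => val_of dflt (c (k0 + j))))
      | right _ => RBot
      end
  end.

(* Least upper bound of chains in [[t]] (flat on bool, pointwise on arrows) *)
Fixpoint sup_val (t : ty) : (nat -> sem t) -> sem t :=
  match t return (nat -> sem t) -> sem t with
  | TBool => fun bs => bs 0
  | TArr t1 t2 => fun fs P d =>
      sup_res (sem_default t2) (sup_val t2) (fun k => fs k P d)
  end.

Definition fixp (t1 t2 : ty) (G : sem (TArr t1 t2) -> sem (TArr t1 t2))
  : sem (TArr t1 t2) :=
  sup_val (TArr t1 t2) (fun k => Nat.iter k G (fun _ _ => RBot)).

Definition envT (o : option ty) : Type :=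
  match o with Some t => sem t | None => unit end.

Definition env (D : ctx) : Type := forall x : var, envT (lookup D x).

Definition empty_env : env [] := fun _ => tt.

Definition ext {D : ctx} (h : env D) (x : var) {t : ty} (v : sem t)
  : env ((x, t) :: D) :=
  fun y =>
    match Nat.eqb y x as b
      return envT (if b then Some t else lookup D y) with
    | true => v
    | false => h y
    end.

Definition cast_lookup {D : ctx} {x : var} {t : ty} (H : lookup D x = Some t)
  (v : envT (lookup D x)) : sem t :=
  match H in (_ = o) return envT o with eq_refl => v end.

(* Access control list *)
Context (A : Principal -> privs).

Definition priv_join (n : Principal) (P : privs) (p : Privilege) : privs :=
  match excluded_middle_informative (A n p) with
  | left _ => fun q => P q \/ q = p
  | right _ => P
  end.

Definition mem_dec (p : Privilege) (P : privs) : {P p} + {~ P p} :=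
  excluded_middle_informative (P p).

Fixpoint den {D : ctx} {e : expr} {t : ty} (d : has_type D e t)
  : Principal -> privs -> env D -> res (sem t) :=
  match d in has_type D e t return Principal -> privs -> env D -> res (sem t) with
  | T_True _ => fun n P h => RVal true
  | T_Var _ x _ H => fun n P h => RVal (cast_lookup H (h x))
  | T_If _ _ _ _ _ d0 d1 d2 => fun n P h =>
      bind (den d0 n P h) (fun b : bool => if b then den d1 n P h else den d2 n P h)
  | T_Lam _ x _ t1 t2 d0 => fun n P h =>
      RVal (fun (P' : privs) (v : sem t1) => den d0 n P' (ext h x v))
  | T_App _ _ _ t1 t2 d1 d2 => fun n P h =>
      bind (den d1 n P h) (fun f : sem (TArr t1 t2) =>
        bind (den d2 n P h) (fun v : sem t1 => f P v))
  | T_Letrec _ f x _ _ t1 t2 _ d1 d2 => fun n P h =>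
      den d2 n P
        (ext h f (fixp t1 t2 (fun g : sem (TArr t1 t2) =>
           fun (P' : privs) (v : sem t1) => den d1 n P' (ext (ext h f g) x v))))
  | T_Signs _ n' _ _ d0 => fun n P h => den d0 n' (fun q => P q /\ A n' q) h
  | T_Dopriv _ p _ _ d0 => fun n P h => den d0 n (priv_join n P p) h
  | T_Check _ p _ _ d0 => fun n P h =>
      if mem_dec p P then den d0 n P h else RStar
  | T_Test _ p _ _ _ d1 d2 => fun n P h =>
      if mem_dec p P then den d1 n P h else den d2 n P h
  end.

End Lang.

Arguments RBot {C}. Arguments RStar {C}. Arguments RVal {C} c.

Arguments ETrue {Principal Privilege}.
Arguments EVar {Principal Privilege} x.
Arguments EIf {Principal Privilege} e e1 e2.
Arguments ELam {Principal Privilege} x e.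
Arguments EApp {Principal Privilege} e1 e2.
Arguments ELetrec {Principal Privilege} f x e1 e2.
Arguments ESigns {Principal Privilege} n e.
Arguments EDopriv {Principal Privilege} p e.
Arguments ECheck {Principal Privilege} p e.
Arguments ETest {Principal Privilege} p e1 e2.
Arguments has_type {Principal Privilege} D e t.
Arguments T_True {Principal Privilege} D.
Arguments T_Var {Principal Privilege} D x t _.
Arguments T_If {Principal Privilege} D e e1 e2 t _ _ _.
Arguments T_Lam {Principal Privilege} D x e t1 t2 _.
Arguments T_App {Principal Privilege} D e1 e2 t1 t2 _ _.
Arguments T_Letrec {Principal Privilege} D f x e1 e2 t1 t2 t _ _.
Arguments T_Signs {Principal Privilege} D n e t _.
Arguments T_Dopriv {Principal Privilege} D p e t _.
Arguments T_Check {Principal Privilege} D p e t _.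
Arguments T_Test {Principal Privilege} D p e1 e2 t _ _.
Arguments closed {Principal Privilege} e.
Arguments p_pure {Principal Privilege} p e.
Arguments empty_env {Privilege}.
Arguments den {Principal Privilege} A {D e t} d.

(* Main.v *)
Require Import Defs.
From Stdlib Require Import List FunctionalExtensionality ClassicalEpsilon.

Section S.
Context (Principal Privilege : Type) (A : Principal -> privs Privilege) (p : Privilege).

Definition peq (P P' : privs Privilege) := forall q, q <> p -> (P q <-> P' q).

Fixpoint Inv (t : ty) : sem Privilege t -> Prop :=
  match t return sem Privilege t -> Prop with
  | TBool => fun _ => True
  | TArr t1 t2 => fun f => forall P P', peq P P' -> forall v, Inv t1 v ->
      f P v = f P' v /\ match f P v with RVal c => Inv t2 c | _ => True end
  end.

Definition InvR t (r : res (sem Privilege t)) : Prop :=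
  match r with RVal c => Inv t c | _ => True end.

Definition InvO (o : option ty) : envT Privilege o -> Prop :=
  match o return envT Privilege o -> Prop with
  | Some t => Inv t | None => fun _ => True end.

Definition InvE (D : ctx) (h : env Privilege D) := forall x, InvO (lookup D x) (h x).

Lemma Inv_default t : Inv t (sem_default Privilege t).
Proof. destruct t; simpl; auto. Qed.

Lemma Inv_sup t : forall fs, (forall k, Inv t (fs k)) -> Inv t (sup_val Privilege t fs).
Proof.
  induction t as [|t1 IH1 t2 IH2]; simpl; auto.
  intros fs Hfs P P' HP v Hv.
  split.
  - f_equal. extensionality k. apply (Hfs k P P' HP v Hv).
  - unfold sup_res.
    destruct (excluded_middle_informative _); auto.
    destruct (excluded_middle_informative _); auto.
    apply IH2. intros j.
    destruct (Hfs (proj1_sig (constructive_indefinite_description _ e) + j) P P' HP v Hv) as [_ H2].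
    destruct (fs _ P v); simpl; auto using Inv_default.
Qed.

Lemma InvE_ext D (h : env Privilege D) x t (v : sem Privilege t) :
  InvE D h -> Inv t v -> InvE ((x,t)::D) (ext Privilege h x v).
Proof.
  intros Hh Hv y. unfold ext. simpl. specialize (Hh y).
  destruct (Nat.eqb y x); auto.
Qed.

Lemma Inv_cast o t (H : o = Some t) (v : envT Privilege o) : InvO o v ->
  Inv t (match H in (_ = o') return envT Privilege o' with eq_refl => v end).
Proof. subst o. simpl. auto. Qed.

Lemma main D e t (d : has_type D e t) : p_pure p e ->
  forall n P P' h, InvE D h -> peq P P' ->
  den A d n P h = den A d n P' h /\ InvR t (den A d n P h).
Proof.
  induction d; simpl; intros Hpu n0 P P' h Hh HP.
  - split; auto; exact I.
  - split; auto. apply Inv_cast. apply Hh.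
  - destruct Hpu as (H0 & H1 & H2).
    destruct (IHd1 H0 n0 P P' h Hh HP) as [E R]. rewrite <- E.
    destruct (den A d1 n0 P h) as [| |b]; simpl; auto.
    destruct b; auto.
  - split; auto. simpl. intros Q Q' HQ v Hv.
    apply IHd; auto. apply InvE_ext; auto.
  - destruct Hpu as (H1 & H2).
    destruct (IHd1 H1 n0 P P' h Hh HP) as [E R]. rewrite <- E.
    destruct (IHd2 H2 n0 P P' h Hh HP) as [E2 R2]. rewrite <- E2.
    destruct (den A d1 n0 P h) as [| |f]; simpl; auto; try exact I.
    all: destruct (den A d2 n0 P h) as [| |v]; simpl; auto; try exact I.
    all: simpl in R; destruct (R P P' HP v R2) as [E3 R3]; split; auto.
  - destruct Hpu as (H1 & H2).
    apply IHd2; auto. apply InvE_ext; auto.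
    unfold fixp. apply Inv_sup. intros k. induction k; simpl.
    + intros; split; auto; exact I.
    + intros Q Q' HQ v Hv. apply IHd1; auto.
      apply InvE_ext; auto. apply InvE_ext; auto.
  - apply IHd; auto. intros q Hq. specialize (HP q Hq). tauto.
  - apply IHd; auto. unfold priv_join.
    destruct (excluded_middle_informative _); auto.
    intros q Hq. specialize (HP q Hq). tauto.
  - destruct Hpu as (Hq & H0). unfold mem_dec.
    destruct (excluded_middle_informative (P p0)) as [a|a];
    destruct (excluded_middle_informative (P' p0)) as [b|b];
    try (specialize (HP p0 Hq); tauto); auto; split; auto; exact I.
  - destruct Hpu as (Hq & H1 & H2). unfold mem_dec.
    destruct (excluded_middle_informative (P p0)) as [a|a];
    destruct (excluded_middle_informative (P' p0)) as [b|b];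
    try (specialize (HP p0 Hq); tauto); auto.
Qed.
End S.

Theorem theorem2 (Principal Privilege : Type)
  (A : Principal -> privs Privilege)
  (n : Principal) (p : Privilege) (Hp : A n p)
  (e : expr Principal Privilege) (t : ty)
  (He : has_type nil e t)
  (Hclosed : closed e)
  (Hpure : p_pure p e) :
  forall (n' : Principal) (P : privs Privilege),
    den A (T_Signs nil n (EDopriv p (ECheck p e)) t
             (T_Dopriv nil p (ECheck p e) t (T_Check nil p e t He)))
        n' P empty_env
    = den A (T_Signs nil n e t He) n' P empty_env.
Proof.
  intros n' P. simpl. unfold priv_join.
  destruct (excluded_middle_informative (A n p)) as [a|a]; [|contradiction].
  unfold mem_dec.
  destruct (excluded_middle_informative _) as [b|b]; [|exfalso; apply b; auto].
  symmetry. apply (main Principal Privilege A p); auto.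
  - intros x. exact I.
  - intros q Hq. split; intros H; [auto|destruct H; [auto|contradiction]].
Qed.
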